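(* Let $A,B$ be closed linear relations in $X^2$ such that $\{A,B\}$ is a dual pair with $(A^* )_s|_{D(B)}=B_s$ and $(B^* )_s|_{D(A)}=A_s$. Suppose $B^*(0)\cap N(A^* )=\{0\}$, $A^*(0)\cap N(B^* )=\{0\}$, and $\tilde A\in\mathrm{Ext}\{A,B\}$. Then: (i) $$n(A^*,B)=\dim(D(B^* )/D(\tilde A))+\dim(D(A^* )/D(\tilde A^* ))=\dim(D(\tilde A)/D(A))+\dim(D(\tilde A^* )/D(B)).$$ (ii) If $\tilde A$ is a quasi-selfadjoint extension of $\{A,B\}$, then $n(A^*,B)$ is even and $$\tfrac{1}{2}n(A^*,B)=\dim(D(B^* )/D(\tilde A))=\dim(D(A^* )/D(\tilde A^* ))=\dim(D(\tilde A)/D(A))=\dim(D(\tilde A^* )/D(B)).$$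
   Context: $X$ is a complex Hilbert space; linear relations are linear subspaces of $X^2=X\times X$, with domain $D(T)$, $N(T)=\{x:(x,0)\in T\}$, $T(0)=\{y:(0,y)\in T\}$. Adjoint: $T^*=\{(f,g):\langle g,x\rangle=\langle f,y\rangle\ \forall(x,y)\in T\}$. For closed $T$: $T_\infty=\{(0,y)\in T\}$, $T_s=T\ominus T_\infty$ (an operator with $D(T_s)=D(T)$). Closed relations $A,B$ form a dual pair $\{A,B\}$ if $A\subset B^*$ (equivalently $B\subset A^*$). $\mathrm{Ext}\{A,B\}$ is the set of closed relations $\tilde A$ with $A\subset\tilde A\subset B^*$. $n(A^*,B)=\dim(D(A^* )/D(B))$. An extension $\tilde A\in\mathrm{Ext}\{A,B\}$ is quasi-selfadjoint if $\dim(D(\tilde A)/D(A))=\dim(D(\tilde A^* )/D(B))$. *)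

(* Defs.v *)
From mathcomp Require Import all_boot all_order all_algebra.
From mathcomp Require Import complex.
From mathcomp Require Import reals boolp.
Set Implicit Arguments. Unset Strict Implicit. Unset Printing Implicit Defensive.
Import Order.TTheory GRing.Theory Num.Theory.
Local Open Scope ring_scope.
Local Open Scope complex_scope.

(* Extended natural numbers: Some n = n, None = infinity. *)
Definition enat := option nat.
Definition eadd (a b : enat) : enat :=
  match a, b with Some m, Some n => Some (m + n)%N | _, _ => None end.

Section LinearRelations.
Variable R : realType.
Variable X : lmodType R[i].
Variable ip : X -> X -> R[i].

Definition inner_product : Prop :=
  [/\ (forall (a : R[i]) (x y z : X), ip (a *: x + y) z = a * ip x z + ip y z),
      (forall x y : X, ip y x = (ip x y)^*),
      (forall x : X, 0 <= ip x x) &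
      (forall x : X, ip x x = 0 -> x = 0)].

Definition cvg_to (u : nat -> X) (x : X) : Prop :=
  forall eps : R[i], 0 < eps -> exists N : nat,
    forall n, (N <= n)%N -> ip (u n - x) (u n - x) < eps.
Definition cauchy (u : nat -> X) : Prop :=
  forall eps : R[i], 0 < eps -> exists N : nat,
    forall m n, (N <= m)%N -> (N <= n)%N -> ip (u m - u n) (u m - u n) < eps.

Definition hilbert : Prop :=
  inner_product /\ (forall u, cauchy u -> exists x, cvg_to u x).

Definition ip2 (p q : X * X) : R[i] := ip p.1 q.1 + ip p.2 q.2.

Definition cvg2_to (u : nat -> X * X) (p : X * X) : Prop :=
  forall eps : R[i], 0 < eps -> exists N : nat,
    forall n, (N <= n)%N ->
      ip2 ((u n).1 - p.1, (u n).2 - p.2) ((u n).1 - p.1, (u n).2 - p.2) < eps.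

Definition subspace (U : X -> Prop) : Prop :=
  U 0 /\ forall (a : R[i]) x y, U x -> U y -> U (a *: x + y).

Definition linrel (T : X * X -> Prop) : Prop :=
  T (0, 0) /\ forall (a : R[i]) p q, T p -> T q -> T (a *: p.1 + q.1, a *: p.2 + q.2).

Definition closed2 (T : X * X -> Prop) : Prop :=
  forall u p, (forall n, T (u n)) -> cvg2_to u p -> T p.

Definition closed_linrel (T : X * X -> Prop) : Prop := linrel T /\ closed2 T.

Definition dom (T : X * X -> Prop) (x : X) : Prop := exists y, T (x, y).
Definition ker (T : X * X -> Prop) (x : X) : Prop := T (x, 0).
Definition mul0 (T : X * X -> Prop) (y : X) : Prop := T (0, y).

Definition adjoint (T : X * X -> Prop) (p : X * X) : Prop :=
  forall x y, T (x, y) -> ip p.2 x = ip p.1 y.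

(* T_oo = {(0,y) in T};  T_s = T (-) T_oo (orthogonal complement in T) *)
Definition rinf (T : X * X -> Prop) (p : X * X) : Prop := T p /\ p.1 = 0.
Definition rs (T : X * X -> Prop) (p : X * X) : Prop :=
  T p /\ forall q, rinf T q -> ip2 p q = 0.

Definition restr (T : X * X -> Prop) (D : X -> Prop) (p : X * X) : Prop :=
  T p /\ D p.1.

Definition subrel (S T : X * X -> Prop) : Prop := forall p, S p -> T p.

Definition dual_pair (A B : X * X -> Prop) : Prop :=
  closed_linrel A /\ closed_linrel B /\ subrel A (adjoint B).

Definition Ext (A B At : X * X -> Prop) : Prop :=
  closed_linrel At /\ subrel A At /\ subrel At (adjoint B).

(* dim(U/V) for subspaces V of U: equals n iff there are n vectors of U
   linearly independent modulo V and spanning U modulo V; infinite otherwise *)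
Definition codim_fin (U V : X -> Prop) (n : nat) : Prop :=
  exists v : 'I_n -> X,
    [/\ (forall i, U (v i)),
        (forall c : 'I_n -> R[i], V (\sum_i c i *: v i) -> forall i, c i = 0) &
        (forall u, U u -> exists (c : 'I_n -> R[i]) (w : X),
            V w /\ u = \sum_i c i *: v i + w)].

Definition qdim (U V : X -> Prop) : enat :=
  match pselect (exists n, codim_fin U V n) with
  | left h => Some (projT1 (cid h))
  | right _ => None
  end.

Definition ndef (A B : X * X -> Prop) : enat := qdim (dom (adjoint A)) (dom B).

Definition quasi_selfadjoint (A B At : X * X -> Prop) : Prop :=
  Ext A B At /\ qdim (dom At) (dom A) = qdim (dom (adjoint At)) (dom B).

End LinearRelations.

(* Main.v *)
Require Import Defs.
From mathcomp Require Import all_boot all_order all_algebra.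
From mathcomp Require Import complex.
From mathcomp Require Import reals boolp.
From mathcomp Require Import classical_sets ring lra.
Import Order.TTheory GRing.Theory Num.Theory.
Local Open Scope ring_scope.

Set Implicit Arguments. Unset Strict Implicit. Unset Printing Implicit Defensive.

Section LinAlg.
Local Open Scope complex_scope.
Variable R : realType.
Variable X : lmodType R[i].
Implicit Types U V W : X -> Prop.

Definition indep V n (v : 'I_n -> X) :=
  forall c : 'I_n -> R[i], V (\sum_i c i *: v i) -> forall i, c i = 0.
Definition spanm V n (v : 'I_n -> X) (u : X) :=
  exists (c : 'I_n -> R[i]) (w : X), V w /\ u = \sum_i c i *: v i + w.

Lemma sub_add V x y : subspace V -> V x -> V y -> V (x + y).
Proof. by case=> _ h Vx Vy; have := h 1 x y Vx Vy; rewrite scale1r. Qed.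

Lemma sub_scale V a x : subspace V -> V x -> V (a *: x).
Proof. by case=> h0 h Vx; have := h a x 0 Vx h0; rewrite addr0. Qed.

Lemma sub_opp V x : subspace V -> V x -> V (- x).
Proof. by move=> sV Vx; rewrite -scaleN1r; apply: sub_scale. Qed.

Lemma sub_sub V x y : subspace V -> V x -> V y -> V (x - y).
Proof. by move=> sV Vx Vy; apply: sub_add => //; apply: sub_opp. Qed.

Lemma sub_sum V n (c : 'I_n -> R[i]) (v : 'I_n -> X) :
  subspace V -> (forall i, V (v i)) -> V (\sum_i c i *: v i).
Proof.
move=> sV Vv; apply: (big_ind V); first by case: sV.
  by move=> x y; apply: sub_add.
by move=> i _; apply: sub_scale.
Qed.

Lemma ker_vec m n (C : 'M[R[i]]_(m, n)) : (n < m)%N ->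
  exists d : 'rV_m, d != 0 /\ d *m C = 0.
Proof.
move=> lt; have : kermx C != 0.
  rewrite kermx_eq0 /row_free; apply/negP => /eqP h.
  by have := rank_leq_col C; rewrite h leqNgt lt.
move=> nz; case: (pselect (exists i, row i (kermx C) != 0)) => [[i hi]|h].
  exists (row i (kermx C)); split => //; apply/sub_kermxP.
  exact: row_sub.
exfalso; move/negP: nz; apply; apply/eqP/row_matrixP => i; rewrite row0.
by case: (eqVneq (row i (kermx C)) 0) => // hi; exfalso; apply: h; exists i.
Qed.

Lemma fewer V n m (v : 'I_n -> X) (w : 'I_m -> X) : subspace V ->
  (forall j, spanm V v (w j)) -> indep V w -> (m <= n)%N.
Proof.
move=> sV hs hi; rewrite leqNgt; apply/negP => lt.
have [f hf] := choice hs.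
have [r hr] := choice hf.
pose C := \matrix_(j < m, i < n) (f j i).
have [d [dnz dC]] := ker_vec C lt.
have key : V (\sum_j d 0 j *: w j).
  have -> : \sum_j d 0 j *: w j =
      \sum_i (d *m C) 0 i *: v i + \sum_j d 0 j *: r j.
    under eq_bigr => j _ do rewrite (proj2 (hr j)) scalerDr.
    rewrite big_split /=; congr (_ + _).
    under eq_bigr => j _ do rewrite scaler_sumr.
    rewrite exchange_big /=; apply: eq_bigr => i _.
    rewrite !mxE scaler_suml; apply: eq_bigr => j _.
    by rewrite mxE scalerA.
  rewrite dC; under eq_bigr => i _ do rewrite mxE scale0r.
  rewrite big1_eq add0r; apply: sub_sum => // j.
  exact: (proj1 (hr j)).
apply/negP: dnz; apply/negPn/eqP/rowP => j; rewrite mxE.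
by have := hi (fun j => d 0 j) key j.
Qed.


Lemma codim_uniq U V n m : subspace V ->
  codim_fin U V n -> codim_fin U V m -> n = m.
Proof.
move=> sV [v [Uv iv sv]] [w [Uw iw sw]]; apply/eqP; rewrite eqn_leq.
by rewrite (fewer sV (fun j => sw _ (Uv j)) iv) (fewer sV (fun j => sv _ (Uw j)) iw).
Qed.

Definition catf (T : Type) a b (f : 'I_a -> T) (g : 'I_b -> T) (i : 'I_(a + b)) : T :=
  match split i with inl j => f j | inr j => g j end.

Lemma catf_l (T : Type) a b (f : 'I_a -> T) (g : 'I_b -> T) j :
  catf f g (lshift b j) = f j.
Proof. by rewrite /catf (unsplitK (inl _ j)). Qed.
Lemma catf_r (T : Type) a b (f : 'I_a -> T) (g : 'I_b -> T) j :
  catf f g (rshift a j) = g j.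
Proof. by rewrite /catf (unsplitK (inr _ j)). Qed.

Lemma sum_catf a b (c : 'I_(a + b) -> R[i]) (v : 'I_a -> X) (w : 'I_b -> X) :
  \sum_i c i *: catf v w i =
  \sum_j c (lshift b j) *: v j + \sum_j c (rshift a j) *: w j.
Proof.
rewrite big_split_ord /=; congr (_ + _); apply: eq_bigr => j _.
  by rewrite catf_l. by rewrite catf_r.
Qed.

Lemma sum_catf2 a b (c : 'I_a -> R[i]) (d : 'I_b -> R[i]) (v : 'I_a -> X) (w : 'I_b -> X) :
  \sum_i catf c d i *: catf v w i = \sum_j c j *: v j + \sum_j d j *: w j.
Proof.
rewrite sum_catf; congr (_ + _); apply: eq_bigr => j _.
  by rewrite catf_l. by rewrite catf_r.
Qed.

Lemma ord_split a b (P : 'I_(a + b) -> Prop) :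
  (forall j, P (lshift b j)) -> (forall j, P (rshift a j)) -> forall i, P i.
Proof. by move=> hl hr i; rewrite -(splitK i); case: (split i) => j /=. Qed.

Lemma indep_ext V k (w : 'I_k -> X) u : subspace V ->
  indep V w -> ~ spanm V w u -> indep V (catf w (fun _ : 'I_1 => u)).
Proof.
move=> sV iw ns c; rewrite sum_catf big_ord1 /=.
set S := (X in V X) => VS.
set a := c (rshift k ord0).
have a0 : a = 0.
  apply/eqP; apply/negP => /negP anz; apply: ns.
  exists (fun j => - a^-1 * c (lshift 1 j)), (a^-1 *: S); split.
    exact: sub_scale.
  rewrite /S scalerDr scalerA mulVf // scale1r addrC -addrA.
  rewrite (_ : \sum_i (- a^-1 * c (lshift 1 i)) *: w i =
     - (a^-1 *: \sum_j c (lshift 1 j) *: w j)); last first.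
    rewrite scaler_sumr -sumrN; apply: eq_bigr => j _.
    by rewrite scalerA mulNr scaleNr.
  by rewrite addrCA subrr addr0.
have hl : forall j, c (lshift 1 j) = 0.
  by apply: iw; move: VS; rewrite /S (a0 : c (rshift k ord0) = 0) scale0r addr0.
apply: ord_split => // j; by rewrite (ord1 j).
Qed.

Lemma fin_dim U V n : subspace U -> subspace V ->
  (forall k (w : 'I_k -> X), (forall j, U (w j)) -> indep V w -> (k <= n)%N) ->
  exists k, (k <= n)%N /\ codim_fin U V k.
Proof.
move=> sU sV hb.
pose P := fun k => `[< exists w : 'I_k -> X, (forall j, U (w j)) /\ indep V w >].
have P0 : exists k, P k.
  exists 0%N; apply/asboolP; exists (fun i => 0); split; first by case.
  by move=> c _ [].
have Pb : forall k, P k -> (k <= n)%N.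
  by move=> k /asboolP [w [Uw iw]]; apply: (hb k w).
case: (ex_maxnP P0 Pb) => k /asboolP [w [Uw iw]] kmax.
exists k; split; first by apply: (hb k w).
exists w; split => // u Uu.
case: (pselect (spanm V w u)) => // ns; exfalso.
have : P (k + 1)%N.
  apply/asboolP; exists (catf w (fun _ : 'I_1 => u)); split.
    by apply: ord_split => j; rewrite ?catf_l ?catf_r.
  exact: indep_ext.
by move/kmax; rewrite addn1 ltnn.
Qed.

Lemma qdim_Some U V n : subspace V -> codim_fin U V n -> qdim U V = Some n.
Proof.
move=> sV hn; rewrite /qdim; case: pselect => [h|h]; last by exfalso; apply: h; exists n.
by congr Some; apply: codim_uniq sV (projT2 (cid h)) hn.
Qed.

Lemma qdim_None U V : ~ (exists n, codim_fin U V n) -> qdim U V = None.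
Proof. by move=> h; rewrite /qdim; case: pselect. Qed.

Lemma concat U V W a b : subspace V -> subspace W ->
  (forall x, W x -> V x) -> (forall x, V x -> U x) ->
  codim_fin U V a -> codim_fin V W b -> codim_fin U W (a + b).
Proof.
move=> sV sW WV VU [v [Uv iv sv]] [w [Vw iw sw]].
exists (catf v w); split.
- by apply: ord_split => j; rewrite ?catf_l ?catf_r //; apply: VU.
- move=> c; rewrite sum_catf => h.
  have V2 : V (\sum_j c (rshift a j) *: w j) by apply: sub_sum.
  have V1 : V (\sum_j c (lshift b j) *: v j).
    have := sub_sub sV (WV _ h) V2; by rewrite addrK.
  have hl := iv _ V1.
  have hr : forall j, c (rshift a j) = 0.
    have s10 : \sum_j c (lshift b j) *: v j = 0.
      by apply: big1 => j _; rewrite hl scale0r.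
    by apply: iw; move: h; rewrite s10 add0r.
  exact: ord_split.
- move=> u Uu; have [c [w1 [Vw1 ->]]] := sv u Uu.
  have [d [w2 [Ww2 ->]]] := sw w1 Vw1.
  exists (catf c d), w2; split => //.
  by rewrite sum_catf2 addrA.
Qed.

Lemma codim_parts U V W n : subspace U -> subspace V -> subspace W ->
  (forall x, W x -> V x) -> (forall x, V x -> U x) ->
  codim_fin U W n ->
  (exists a, codim_fin U V a) /\ (exists b, codim_fin V W b).
Proof.
move=> sU sV sW WV VU [v [Uv iv sv]]; split.
- have hb : forall k (w : 'I_k -> X), (forall j, U (w j)) -> indep V w -> (k <= n)%N.
    move=> k w Uw iw; apply: (fewer sW (v := v)).
      by move=> j; apply: sv.
    by move=> c /WV; apply: iw.
  by have [a [_ h]] := fin_dim sU sV hb; exists a.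
- have hb : forall k (w : 'I_k -> X), (forall j, V (w j)) -> indep W w -> (k <= n)%N.
    move=> k w Uw iw; apply: (fewer sW (v := v) _ iw) => j.
    by apply: sv; apply: VU.
  by have [a [_ h]] := fin_dim sV sW hb; exists a.
Qed.

Lemma qdim_add U V W : subspace U -> subspace V -> subspace W ->
  (forall x, W x -> V x) -> (forall x, V x -> U x) ->
  qdim U W = eadd (qdim U V) (qdim V W).
Proof.
move=> sU sV sW WV VU.
case: (pselect (exists n, codim_fin U W n)) => [[n hn]|hn].
  have [[a ha] [b hb]] := codim_parts sU sV sW WV VU hn.
  rewrite (qdim_Some sV ha) (qdim_Some sW hb).
  exact: qdim_Some sW (concat sV sW WV VU ha hb).
rewrite (qdim_None hn).
case: (pselect (exists a, codim_fin U V a)) => [[a ha]|ha]; last by rewrite (qdim_None ha).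
case: (pselect (exists b, codim_fin V W b)) => [[b hb]|hb]; last first.
  by rewrite (qdim_None hb); case: (qdim U V).
by exfalso; apply: hn; exists (a + b)%N; exact: (concat sV sW WV VU ha hb).
Qed.

Lemma lin_sum U' (g : X -> R[i]) k (d : 'I_k -> R[i]) (w : 'I_k -> X) :
  subspace U' -> (forall j, U' (w j)) ->
  (forall f1 f2 a, U' f1 -> U' f2 -> g (a *: f1 + f2) = a * g f1 + g f2) ->
  g (\sum_j d j *: w j) = \sum_j d j * g (w j).
Proof.
move=> sU' Uw hl.
have g0 : g 0 = 0.
  case: sU' => U0 _; have := hl 0 0 1 U0 U0.
  rewrite scaler0 addr0 mul1r => h; apply: (addrI (g 0)); by rewrite addr0 -h.
suff [] : U' (\sum_j d j *: w j) /\ g (\sum_j d j *: w j) = \sum_j d j * g (w j) by [].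
apply: (big_rec2 (fun f s => U' f /\ g f = s)) => [|j f s _ [Uf gf]].
  by split => //; case: sU'.
split; first by case: sU' => _ h; apply: h.
by rewrite hl // gf.
Qed.

Lemma le_dim U V U' V' (g : X -> X -> R[i]) n :
 subspace U -> subspace V -> subspace U' -> subspace V' ->
 (forall x f, V x -> U' f -> g x f = 0) ->
 (forall x1 x2 a f, U x1 -> U x2 -> U' f -> g x1 f = 0 -> g x2 f = 0 ->
     g (a *: x1 + x2) f = 0) ->
 (forall x f1 f2 a, U x -> U' f1 -> U' f2 -> g x (a *: f1 + f2) = a * g x f1 + g x f2) ->
 (forall f, U' f -> (forall x, U x -> g x f = 0) -> V' f) ->
 codim_fin U V n -> exists k, (k <= n)%N /\ codim_fin U' V' k.
Proof.
move=> sU sV sU' sV' g1 g2 g3 g4 [v [Uv iv sv]].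
apply: fin_dim => // k w Uw iw; rewrite leqNgt; apply/negP => lt.
pose C := \matrix_(j < k, i < n) g (v i) (w j).
have [d [dnz dC]] := ker_vec C lt.
pose f := \sum_j d 0 j *: w j.
have Uf : U' f by apply: sub_sum.
have gv : forall i, g (v i) f = 0.
  move=> i; rewrite /f (lin_sum (g := g (v i)) _ sU' Uw); last first.
    by move=> f1 f2 a ? ?; apply: g3.
  transitivity ((d *m C) 0 i); last by rewrite dC mxE.
  rewrite mxE.
  by apply: eq_bigr => j _; rewrite mxE.
have gx : forall x, U x -> g x f = 0.
  move=> x Ux; have [c [w0 [Vw0 ex]]] := sv x Ux.
  pose P := fun y => U y /\ g y f = 0.
  have sP : subspace P.
    split; first by split; [case: sU | apply: g1 => //; case: sV].
    by move=> a y1 y2 [U1 h1] [U2 h2]; split; [case: sU => _ h; apply: h | apply: g2].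
  have P1 : P (\sum_i c i *: v i) by apply: sub_sum => // i; split.
  have Uw0 : U w0.
    have -> : w0 = x - \sum_i c i *: v i by rewrite ex addrC addKr.
    by apply: sub_sub => //; case: P1.
  have := sub_add sP P1 (conj Uw0 (g1 _ _ Vw0 Uf)); rewrite -ex; by case.
have Vf := g4 f Uf gx.
apply/negP: dnz; apply/negPn/eqP/rowP => j; rewrite mxE.
exact: (iw (fun j => d 0 j) Vf j).
Qed.

Lemma qdim_eq U V U' V' (g g' : X -> X -> R[i]) :
 subspace U -> subspace V -> subspace U' -> subspace V' ->
 (forall x f, V x -> U' f -> g x f = 0) ->
 (forall x1 x2 a f, U x1 -> U x2 -> U' f -> g x1 f = 0 -> g x2 f = 0 ->
     g (a *: x1 + x2) f = 0) ->
 (forall x f1 f2 a, U x -> U' f1 -> U' f2 -> g x (a *: f1 + f2) = a * g x f1 + g x f2) ->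
 (forall f, U' f -> (forall x, U x -> g x f = 0) -> V' f) ->
 (forall x f, V' x -> U f -> g' x f = 0) ->
 (forall x1 x2 a f, U' x1 -> U' x2 -> U f -> g' x1 f = 0 -> g' x2 f = 0 ->
     g' (a *: x1 + x2) f = 0) ->
 (forall x f1 f2 a, U' x -> U f1 -> U f2 -> g' x (a *: f1 + f2) = a * g' x f1 + g' x f2) ->
 (forall f, U f -> (forall x, U' x -> g' x f = 0) -> V f) ->
 qdim U V = qdim U' V'.
Proof.
move=> sU sV sU' sV' g1 g2 g3 g4 h1 h2 h3 h4.
case: (pselect (exists n, codim_fin U V n)) => [[n hn]|hn].
  have [k [kn hk]] := le_dim sU sV sU' sV' g1 g2 g3 g4 hn.
  have [m [mk hm]] := le_dim sU' sV' sU sV h1 h2 h3 h4 hk.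
  have e := codim_uniq sV hm hn; subst m.
  rewrite (qdim_Some sV hn) (qdim_Some sV' hk); congr Some.
  by apply/eqP; rewrite eqn_leq kn mk.
rewrite (qdim_None hn) qdim_None // => [[k hk]]; apply: hn.
have [m [_ hm]] := le_dim sU' sV' sU sV h1 h2 h3 h4 hk; by exists m.
Qed.

End LinAlg.


Section IP.
Local Open Scope complex_scope.
Variable R : realType.
Variable V : lmodType R[i].
Variable ip : V -> V -> R[i].
Hypothesis hI : inner_product ip.

Lemma ipL a x y z : ip (a *: x + y) z = a * ip x z + ip y z.
Proof. by have [h _ _ _] := hI; apply: h. Qed.
Lemma ipC x y : ip y x = (ip x y)^*.
Proof. by have [_ h _ _] := hI; apply: h. Qed.
Lemma ip_ge0 x : 0 <= ip x x.
Proof. by have [_ _ h _] := hI; apply: h. Qed.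
Lemma ip_eq0 x : ip x x = 0 -> x = 0.
Proof. by have [_ _ _ h] := hI; apply: h. Qed.

Lemma ip0l z : ip 0 z = 0.
Proof.
have := ipL 1 0 0 z; rewrite scaler0 addr0 mul1r => h.
by apply: (addrI (ip 0 z)); rewrite addr0 -h.
Qed.
Lemma ipDl x y z : ip (x + y) z = ip x z + ip y z.
Proof. by have := ipL 1 x y z; rewrite scale1r mul1r. Qed.
Lemma ipZl a x z : ip (a *: x) z = a * ip x z.
Proof. by have := ipL a x 0 z; rewrite addr0 ip0l addr0. Qed.
Lemma ipNl x z : ip (- x) z = - ip x z.
Proof. by rewrite -scaleN1r ipZl mulN1r. Qed.
Lemma ipBl x y z : ip (x - y) z = ip x z - ip y z.
Proof. by rewrite ipDl ipNl. Qed.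
Lemma ip0r z : ip z 0 = 0.
Proof. by rewrite ipC ip0l conjc0. Qed.
Lemma ipDr x y z : ip z (x + y) = ip z x + ip z y.
Proof. by rewrite ipC ipDl rmorphD /= -!ipC. Qed.
Lemma ipZr a x z : ip z (a *: x) = a^* * ip z x.
Proof. by rewrite ipC ipZl rmorphM /= -ipC. Qed.
Lemma ipNr x z : ip z (- x) = - ip z x.
Proof. by rewrite ipC ipNl rmorphN /= -ipC. Qed.
Lemma ipBr x y z : ip z (x - y) = ip z x - ip z y.
Proof. by rewrite ipDr ipNr. Qed.

Definition Nn x := complex.Re (ip x x).
Lemma ipxx x : ip x x = (Nn x)%:C.
Proof. by rewrite /Nn RRe_real // ger0_real // ip_ge0. Qed.
Lemma Nn_ge0 x : 0 <= Nn x.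
Proof. by rewrite -lecR -ipxx ip_ge0. Qed.
Lemma Nn_eq0 x : Nn x = 0 -> x = 0.
Proof. by move=> h; apply: ip_eq0; rewrite ipxx h. Qed.

Lemma conjE (a : R[i]) : Num.conj a = conjc a.
Proof. reflexivity. Qed.
Lemma ReC (r : R) : complex.Re (r%:C) = r. Proof. by []. Qed.
Lemma ReD (a b : R[i]) : complex.Re (a + b) = complex.Re a + complex.Re b.
Proof. by case: a; case: b. Qed.
Lemma ReN (a : R[i]) : complex.Re (- a) = - complex.Re a.
Proof. by case: a. Qed.
Lemma ReCM (r : R) (a : R[i]) : complex.Re (r%:C * a) = r * complex.Re a.
Proof. by case: a => x y /=; rewrite mul0r subr0. Qed.
Lemma ReJ (a : R[i]) : complex.Re (Num.conj a) = complex.Re a.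
Proof. by rewrite conjE; case: a. Qed.

Lemma NnD x y : Nn (x + y) = Nn x + Nn y + 2 * complex.Re (ip x y).
Proof.
rewrite /Nn ipDl !ipDr (ipC x y) !ReD ReJ; lra.
Qed.
Lemma NnB x y : Nn (x - y) = Nn x + Nn y - 2 * complex.Re (ip x y).
Proof.
rewrite /Nn ipBl !ipBr (ipC x y) !(ReD, ReN) ReJ; lra.
Qed.
Lemma conjCR (r : R) : Num.conj (r%:C) = r%:C.
Proof. by rewrite conjE /= oppr0. Qed.

Lemma NnZ (r : R) x : Nn (r%:C *: x) = r ^+ 2 * Nn x.
Proof. by rewrite /Nn ipZl ipZr conjCR mulrA -rmorphM ReCM. Qed.
Lemma ReipZ (r : R) x y : complex.Re (ip (r%:C *: x) y) = r * complex.Re (ip x y).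
Proof. by rewrite ipZl ReCM. Qed.

Lemma para x y : Nn (x + y) + Nn (x - y) = 2 * Nn x + 2 * Nn y.
Proof. rewrite NnD NnB; lra. Qed.

Lemma cs_t (t : R) x y : 0 < t -> 2 * t * complex.Re (ip x y) <= t ^+ 2 * Nn x + Nn y.
Proof.
move=> t0; have := Nn_ge0 (t%:C *: x - y); rewrite NnB NnZ ReipZ; lra.
Qed.


Lemma NnN x : Nn (- x) = Nn x.
Proof. by rewrite /Nn ipNl ipNr opprK. Qed.

Lemma eps_real (eps : R[i]) : 0 < eps -> eps = (complex.Re eps)%:C /\ 0 < complex.Re eps.
Proof.
case: eps => a b; rewrite ltcE /= => /andP [/eqP -> h]; split => //.
Qed.

Lemma ltC (a b : R) : (a%:C < b%:C) = (a < b).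
Proof. by rewrite ltcE /= eqxx. Qed.

Lemma zconj (z : R[i]) : z * Num.conj z = (complex.Re (z * Num.conj z))%:C /\
   0 <= complex.Re (z * Num.conj z) /\ (complex.Re (z * Num.conj z) = 0 -> z = 0).
Proof.
case: z => a b; rewrite conjE /=; split.
  by congr (_ +i* _); ring.
split; first by nra.
move=> h; have a0 : a = 0 by nra.
have b0 : b = 0 by nra.
by rewrite a0 b0.
Qed.

Definition closedV (M : V -> Prop) :=
  forall u x, (forall n, M (u n)) -> cvg_to ip u x -> M x.

Lemma subM (M : V -> Prop) a x y : subspace M -> M x -> M y -> M (a *: x + y).
Proof. by case=> _ h; apply: h. Qed.

Lemma inv_small (e : R) : 0 < e -> exists K : nat, forall n, (K <= n)%N -> 4 * (n.+1%:R)^-1 < e.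
Proof.
move=> e0; exists (Num.Def.archi_bound (4 / e)) => n hn.
have hK := @archi_boundP R (4 / e) (ltW (divr_gt0 (ltr0Sn R 3) e0)).
set K := Num.Def.archi_bound _ in hK hn.
have hKn : (K%:R : R) <= n%:R by rewrite ler_nat.
have : 4 < e * n.+1%:R.
  move: hK; rewrite ltr_pdivrMr // => h.
  have : (n%:R : R) < n.+1%:R by rewrite ltr_nat.
  nra.
by rewrite ltr_pdivrMr ?ltr0Sn // mulrC.
Qed.

Lemma proj (hH : hilbert ip) (M : V -> Prop) : subspace M -> closedV M ->
  forall v, exists m, M m /\ forall w, M w -> ip (v - m) w = 0.
Proof.
move=> sM cM v.
pose E := (fun r : R => exists m, M m /\ r = Nn (v - m)).
have M0 : M 0 by case: sM.
have hE : has_inf E.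
  split; first by exists (Nn (v - 0)); exists 0.
  by exists 0 => r [m [_ ->]]; apply: Nn_ge0.
set d := inf E.
have dle : forall m, M m -> d <= Nn (v - m).
  by move=> m Mm; apply: (ge_inf (proj2 hE)); exists m.
have d0 : 0 <= d.
  apply: lb_le_inf; first exact: (proj1 hE).
  by move=> r [m [_ ->]]; apply: Nn_ge0.
have hm : forall k : nat, exists m, M m /\ Nn (v - m) < d + k.+1%:R^-1.
  move=> k; have [e [m [Mm ->]] he] := inf_adherent (E := E) (eps := k.+1%:R^-1)
    (ltac:(by rewrite invr_gt0 ltr0Sn)) hE.
  by exists m.
have [ms hms] := choice hm.
have bnd : forall j k, Nn (ms j - ms k) <= 2 * Nn (v - ms j) + 2 * Nn (v - ms k) - 4 * d.
  move=> j k.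
  have := para (v - ms j) (v - ms k).
  set mid := (2^-1 : R)%:C *: (ms j + ms k).
  have Mj := (hms j).1; have Mk := (hms k).1.
  have Mmid : M mid.
    have := subM 1 sM Mj Mk; rewrite scale1r => Ms.
    by have := subM ((2^-1 : R)%:C) sM Ms M0; rewrite addr0.
  have e1 : v - ms j + (v - ms k) = (2 : R)%:C *: (v - mid).
    rewrite scalerBr /mid scalerA -rmorphM mulfV ?pnatr_eq0 // scale1r.
    rewrite rmorph_nat scaler_nat mulr2n opprD addrACA //.
  have e2 : v - ms j - (v - ms k) = - (ms j - ms k).
    by rewrite opprB addrC addrA subrK opprB.
  rewrite e1 e2 NnZ NnN => hp.
  have hd := dle _ Mmid.
  rewrite expr2 in hp; lra.
have cau : cauchy ip ms.
  move=> eps /eps_real [-> e0].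
  have [K hK] := inv_small e0.
  exists K => m n hmK hnK; rewrite ipxx ltC.
  have := bnd m n; have := (hms m).2; have := (hms n).2.
  have := hK _ hmK; have := hK _ hnK; rewrite ?ReC; move: (m.+1%:R : R) (n.+1%:R : R) => a b; lra.
have [x hx] := proj2 hH ms cau.
have Mx : M x by apply: (cM ms) => // n; case: (hms n).
have vx : Nn (v - x) <= d.
  apply/ler_addgt0Pr => eps e0.
  set dl := eps / (d + 4 + eps).
  have dl0 : 0 < dl by rewrite divr_gt0 //; lra.
  have dl1 : dl <= 1 by rewrite ler_pdivrMr; lra.
  have dl2 : dl * (d + 4) <= eps.
    rewrite /dl mulrC mulrA ler_pdivrMr; nra.
  have pos : 0 < (dl * dl)%:C by rewrite ltC mulr_gt0.
  have [N1 hN1] := hx _ pos.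
  have [N2 hN2] := inv_small (mulr_gt0 (ltr0Sn R 3) dl0).
  pose n := maxn N1 N2.
  have h1 : Nn (ms n - x) < dl * dl.
    by rewrite -ltC -ipxx; apply: hN1; rewrite leq_maxl.
  have h2 : Nn (v - ms n) < d + dl.
    have := hN2 n (leq_maxr _ _); have := hms n; move=> [_ h] h'.
    move: h h'; move: (n.+1%:R : R) => a; lra.
  have e3 : v - x = (v - ms n) + (ms n - x) by rewrite addrA subrK.
  have hc := cs_t (v - ms n) (ms n - x) dl0.
  have hnn := Nn_ge0 (v - ms n).
  have hnn2 := Nn_ge0 (ms n - x).
  rewrite e3 NnD.
  set A := Nn (v - ms n) in hc h2 hnn *.
  set B := Nn (ms n - x) in hc h1 hnn2 *.
  set C := complex.Re _ in hc *.
  have : dl * (A + B + 2 * C) <= dl * (d + eps).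
    nra.
  by rewrite ler_pM2l.
exists x; split => // w Mw.
set e := v - x; set z := ip e w.
have [hs [s0 sz]] := zconj z.
set s := complex.Re (z * Num.conj z) in hs s0 sz.
have key : forall t : R, 0 < t -> 0 <= t * s * Nn w - 2 * s.
  move=> t t0.
  have Mc : M (x + (t%:C * z) *: w) by rewrite addrC; apply: subM.
  have := dle _ Mc.
  have -> : v - (x + (t%:C * z) *: w) = e - (t%:C * z) *: w by rewrite opprD addrA.
  rewrite NnB.
  have -> : Nn ((t%:C * z) *: w) = t ^+ 2 * s * Nn w.
    rewrite /Nn ipZl ipZr ipxx rmorphM /= conjCR.
    have -> : t%:C * z * (t%:C * Num.conj z * (Nn w)%:C) = (t ^+ 2 * Nn w)%:C * (z * Num.conj z).
      by rewrite rmorphM rmorphXn /=; ring.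
    by rewrite ReCM; rewrite /s; ring.
  have -> : complex.Re (ip e ((t%:C * z) *: w)) = t * s.
    rewrite ipZr rmorphM /= conjCR -/z.
    by rewrite -mulrA [Num.conj z * z]mulrC ReCM.
  move=> h.
  have := vx; rewrite -/e => h2.
  have : 0 <= t * (t * s * Nn w - 2 * s) by nra.
  by rewrite pmulr_rge0.
have hw := Nn_ge0 w.
have := key (1 / (Nn w + 1)) (ltac:(rewrite divr_gt0 //; lra)).
have hnw : 1 / (Nn w + 1) * Nn w < 1.
  rewrite mulrC mulrA ltr_pdivrMr; lra.
move=> h; apply: sz; nra.
Qed.

End IP.

Section Two.
Local Open Scope complex_scope.
Variable R : realType.
Variable X : lmodType R[i].
Variable ip : X -> X -> R[i].
Hypothesis hX : hilbert ip.
Let hI : inner_product ip := proj1 hX.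

Lemma ip2xx (p : X * X) : ip2 ip p p = (Nn ip p.1 + Nn ip p.2)%:C.
Proof. by rewrite /ip2 !(ipxx hI) rmorphD. Qed.

Lemma ip2_ip : inner_product (ip2 ip).
Proof.
split.
- move=> a p q r; rewrite /ip2 /= !(ipL hI); ring.
- by move=> p q; rewrite /ip2 (ipC hI p.1) (ipC hI p.2) rmorphD.
- move=> p; rewrite ip2xx ler0c; apply: addr_ge0; apply: (Nn_ge0 hI).
- move=> [x y]; rewrite ip2xx /= => h.
  have : Nn ip x + Nn ip y = 0 by case: h.
  have := Nn_ge0 hI x; have := Nn_ge0 hI y => h1 h2 h3.
  have hx : Nn ip x = 0 by lra.
  have hy : Nn ip y = 0 by lra.
  by rewrite (Nn_eq0 hI hx) (Nn_eq0 hI hy).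
Qed.

Lemma hilbert2 : hilbert (ip2 ip).
Proof.
split; first exact: ip2_ip.
move=> u cu.
have c1 : cauchy ip (fun n => (u n).1).
  move=> eps /eps_real [epsE e0]; have pos : 0 < (complex.Re eps)%:C by rewrite ltC.
  have [N hN] := cu _ pos; exists N => m n hm hn; rewrite epsE (ipxx hI) ltC.
  have := hN m n hm hn; rewrite ip2xx ltC /= => h.
  have := Nn_ge0 hI ((u m).2 - (u n).2); lra.
have c2 : cauchy ip (fun n => (u n).2).
  move=> eps /eps_real [epsE e0]; have pos : 0 < (complex.Re eps)%:C by rewrite ltC.
  have [N hN] := cu _ pos; exists N => m n hm hn; rewrite epsE (ipxx hI) ltC.
  have := hN m n hm hn; rewrite ip2xx ltC /= => h.
  have := Nn_ge0 hI ((u m).1 - (u n).1); lra.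
have [x1 h1] := proj2 hX _ c1.
have [x2 h2] := proj2 hX _ c2.
exists (x1, x2) => eps /eps_real [epsE e0].
have pos : 0 < (complex.Re eps / 2)%:C by rewrite ltC divr_gt0.
have [N1 hN1] := h1 _ pos; have [N2 hN2] := h2 _ pos.
exists (maxn N1 N2) => n hn; rewrite epsE ip2xx ltC /=.
have := hN1 n (leq_trans (leq_maxl _ _) hn); rewrite (ipxx hI) ltC.
have := hN2 n (leq_trans (leq_maxr _ _) hn); rewrite (ipxx hI) ltC.
lra.
Qed.

End Two.


Section Rel.
Local Open Scope complex_scope.
Variable R : realType.
Variable X : lmodType R[i].
Variable ip : X -> X -> R[i].
Hypothesis hX : hilbert ip.
Let hI : inner_product ip := proj1 hX.
Implicit Types P Q T : X * X -> Prop.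

Lemma adj_lin T : linrel (adjoint ip T).
Proof.
split; first by move=> x y _ /=; rewrite (ip0l hI) (ip0l hI).
by move=> a p q hp hq x y hT /=; rewrite !(ipL hI) (hp x y hT) (hq x y hT).
Qed.

Lemma dom_sub T : linrel T -> subspace (dom T).
Proof.
case=> T0 hT; split; first by exists 0.
by move=> a x y [x' hx] [y' hy]; exists (a *: x' + y'); exact: (hT a (x, x') (y, y') hx hy).
Qed.

Lemma lin_sub T : linrel T -> subspace (T : (X * X)%type -> Prop).
Proof. by case=> T0 hT; split => // a p q; apply: hT. Qed.

Lemma adj_anti P Q : Defs.subrel P Q -> Defs.subrel (adjoint ip Q) (adjoint ip P).
Proof. by move=> PQ p hp x y hxy; apply: hp; apply: PQ. Qed.

Lemma adj2 T : Defs.subrel T (adjoint ip (adjoint ip T)).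
Proof.
move=> [x y] hT f g hfg /=.
by rewrite (ipC hI f y) (ipC hI g x) (hfg x y hT).
Qed.

Lemma sym_adj P Q : Defs.subrel P (adjoint ip Q) -> Defs.subrel Q (adjoint ip P).
Proof.
move=> PQ [x y] hQ a b hP /=.
by rewrite (ipC hI a y) (ipC hI b x) (PQ _ hP x y hQ).
Qed.

Lemma closedV_T T : closed2 ip T -> closedV (ip2 ip) T.
Proof. by move=> hT u x hu hc; apply: (hT u x hu hc). Qed.

Lemma adj2_closed T : closed_linrel ip T -> Defs.subrel (adjoint ip (adjoint ip T)) T.
Proof.
move=> [lT cT] p hp.
have [m [Tm hm]] := proj (ip2_ip hX) (hilbert2 hX) (lin_sub lT) (closedV_T cT) p.
set r := p - m.
have hr : adjoint ip (adjoint ip T) r.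
  have s2 := lin_sub (adj_lin (adjoint ip T)).
  exact: (sub_sub s2 hp (adj2 Tm)).
have hs : adjoint ip T (- r.2, r.1).
  move=> x y hxy /=; have := hm (x, y) hxy; rewrite /ip2 /= (ipNl hI) => h.
  by apply/eqP; rewrite -subr_eq0 opprK; apply/eqP.
have := hr _ _ hs; rewrite (ipNr hI) !(ipxx hI) => h.
have : Nn ip r.1 + Nn ip r.2 = 0.
  have : (Nn ip r.1 + Nn ip r.2)%:C = 0 by rewrite rmorphD /= -h addNr.
  by case.
have := Nn_ge0 hI r.1; have := Nn_ge0 hI r.2 => h1 h2 h3.
have e1 : r.1 = 0 by apply: (Nn_eq0 hI); lra.
have e2 : r.2 = 0 by apply: (Nn_eq0 hI); lra.
have : r = 0 by rewrite [LHS]surjective_pairing e1 e2.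
by move/eqP; rewrite subr_eq0 => /eqP ->.
Qed.


Lemma rinf_sub T : linrel T -> subspace (rinf T : (X * X)%type -> Prop).
Proof.
case=> T0 hT; split; first by split.
move=> a p q [hp p1] [hq q1]; split; first by apply: hT.
by rewrite /= p1 q1 scaler0 addr0.
Qed.

Lemma rinf_closed T : closed_linrel ip T -> closedV (ip2 ip) (rinf T).
Proof.
move=> [lT cT] u x hu hc; split.
  by apply: (cT u x) => // n; case: (hu n).
apply: (Nn_eq0 hI); apply/eqP; rewrite eq_le Nn_ge0 // andbT.
apply/ler_addgt0Pr => e e0; rewrite add0r.
have pos : 0 < e%:C by rewrite ltC.
have [N hN] := hc _ pos.
have := hN N (leqnn N); rewrite (ip2xx hX) ltC /=.
rewrite (proj2 (hu N)) sub0r (NnN hI).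
have := Nn_ge0 hI ((u N).2 - x.2); lra.
Qed.

Lemma mul0_eq P Q : closed_linrel ip P -> Defs.subrel P (adjoint ip Q) ->
  restr (rs ip (adjoint ip Q)) (dom P) = rs ip P ->
  (forall x, mul0 (adjoint ip Q) x -> ker (adjoint ip P) x -> x = 0) ->
  forall y, mul0 (adjoint ip Q) y -> mul0 P y.
Proof.
move=> hP PQ hs h0 y hy.
have sI := rinf_sub (proj1 hP).
have cI := rinf_closed hP.
have sQ := lin_sub (adj_lin Q).
have [m [[Pm m1] hm]] := proj (ip2_ip hX) (hilbert2 hX) sI cI (0, y).
set y0 := y - m.2.
have e : (0, y) - m = (0, y0) by rewrite [m]surjective_pairing m1 /=; congr pair; rewrite subr0.
have Qy0 : adjoint ip Q (0, y0) by rewrite -e; apply: (sub_sub sQ hy (PQ _ Pm)).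
have ky0 : ker (adjoint ip P) y0.
  move=> x z hxz /=; rewrite (ip0l hI).
  have [m' [[Pm' m1'] hm']] := proj (ip2_ip hX) (hilbert2 hX) sI cI (x, z).
  set q := (x, z) - m'.
  have Pq : P q by apply: (sub_sub (lin_sub (proj1 hP)) hxz Pm').
  have rq : rs ip P q by split => // q0 hq0; apply: hm'.
  rewrite -hs in rq; case: rq => [[_ hq] _].
  have := hq (0, y0) (conj Qy0 erefl); rewrite /ip2 /= (ip0r hI) add0r => h1.
  have := hm m' (conj Pm' m1'); rewrite e /ip2 /= (ip0l hI) add0r => h2.
  have -> : z = (z - m'.2) + m'.2 by rewrite subrK.
  rewrite (ipDr hI) h2 addr0 (ipC hI) h1.
  by rewrite rmorph0.
have y00 := h0 _ Qy0 ky0.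
have -> : y = m.2 by apply/eqP; rewrite -subr_eq0 -/y0 y00.
by move: Pm; rewrite /mul0 [m]surjective_pairing m1.
Qed.


Lemma partner T : exists Y : X -> X, forall x, dom T x -> T (x, Y x).
Proof.
have h : forall x, exists y, dom T x -> T (x, y).
  move=> x; case: (pselect (dom T x)) => [[y hy]|n]; first by exists y.
  by exists 0.
by have [Y hY] := choice h; exists Y.
Qed.

Lemma pair_dim P Q Rr S : linrel P -> linrel Q -> linrel Rr -> linrel S ->
 Defs.subrel P Q -> Defs.subrel Rr S ->
 Defs.subrel S (adjoint ip P) -> Defs.subrel Rr (adjoint ip Q) ->
 (forall y, mul0 Q y -> mul0 P y) -> (forall g, mul0 S g -> mul0 Rr g) ->
 (forall f g, S (f, g) -> adjoint ip Q (f, g) -> dom Rr f) ->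
 (forall x y, Q (x, y) -> adjoint ip S (x, y) -> dom P x) ->
 qdim (dom Q) (dom P) = qdim (dom S) (dom Rr).
Proof.
move=> lP lQ lR lS PQ RS SP RQ m0Q m0S g4r g4r'.
have [Y hY] := partner Q.
have [G hG] := partner S.
pose g := fun x f => ip f (Y x) - ip (G f) x.
pose g' := fun f x => Num.conj (g x f).
have key : forall x y f h, Q (x, y) -> S (f, h) -> g x f = ip f y - ip h x.
  move=> x y f h hQ hS; rewrite /g.
  have hQY := hY x (ex_intro _ y hQ).
  have hSG := hG f (ex_intro _ h hS).
  have d1 : P (0, Y x - y).
    apply: m0Q; have := sub_sub (lin_sub lQ) hQY hQ.
    by change (Q (x - x, Y x - y) -> Q (0, Y x - y)); rewrite subrr.
  have d2 : Rr (0, G f - h).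
    apply: m0S; have := sub_sub (lin_sub lS) hSG hS.
    by change (S (f - f, G f - h) -> S (0, G f - h)); rewrite subrr.
  have e1 := SP _ hSG _ _ d1; rewrite /= (ip0r hI) (ipBr hI) in e1.
  have e2 := RQ _ d2 _ _ hQ; rewrite /= (ip0l hI) (ipBl hI) in e2.
  move/eqP: e1; rewrite eq_sym subr_eq0 => /eqP ->.
  by move/eqP: e2; rewrite subr_eq0 => /eqP ->.
have sP := dom_sub lP; have sQ := dom_sub lQ.
have sR := dom_sub lR; have sS := dom_sub lS.
have gl : forall x f1 f2 a, dom Q x -> dom S f1 -> dom S f2 ->
    g x (a *: f1 + f2) = a * g x f1 + g x f2.
  move=> x f1 f2 a [y hQ] [h1 hS1] [h2 hS2].
  have hS := proj2 lS a (f1, h1) (f2, h2) hS1 hS2.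
  rewrite (key _ _ _ _ hQ hS) (key _ _ _ _ hQ hS1) (key _ _ _ _ hQ hS2) /=.
  rewrite !(ipL hI); ring.
have gc : forall x1 x2 a f, dom Q x1 -> dom Q x2 -> dom S f ->
    g (a *: x1 + x2) f = Num.conj a * g x1 f + g x2 f.
  move=> x1 x2 a f [y1 h1] [y2 h2] [h hS].
  have hQ := proj2 lQ a (x1, y1) (x2, y2) h1 h2.
  rewrite (key _ _ _ _ hQ hS) (key _ _ _ _ h1 hS) (key _ _ _ _ h2 hS) /=.
  rewrite !(ipDr hI) !(ipZr hI); ring.
have cj0 : forall z : R[i], Num.conj z = 0 -> z = 0.
  by move=> z /eqP; rewrite conjC_eq0 => /eqP.
apply: (qdim_eq (g := g) (g' := g')) => //.
- move=> x f [y hPxy] [h hSfh].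
  by rewrite (key x y f h (PQ _ hPxy) hSfh) (SP _ hSfh x y hPxy) subrr.
- by move=> x1 x2 a f h1 h2 h3 e1 e2; rewrite gc // e1 e2 mulr0 addr0.
- move=> f [h hS] hz; apply: (g4r f h hS) => x y hQ /=.
  have := hz x (ex_intro _ y hQ); rewrite (key x y f h hQ hS) => /eqP.
  by rewrite subr_eq0 => /eqP ->.
- move=> f x [h hRr] [y hQ].
  by rewrite /g' (key x y f h hQ (RS _ hRr)) (RQ _ hRr x y hQ) subrr rmorph0.
- move=> f1 f2 a x h1 h2 h3 e1 e2; rewrite /g' gl //.
  by rewrite (cj0 _ e1) (cj0 _ e2) mulr0 addr0 rmorph0.
- move=> f x1 x2 a h1 h2 h3; rewrite /g' gc // rmorphD rmorphM /=.
  by rewrite conjCK.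
- move=> x [y hQ] hz; apply: (g4r' x y hQ) => f h hS /=.
  have := hz f (ex_intro _ h hS); rewrite /g' => /cj0.
  rewrite (key x y f h hQ hS) => /eqP; rewrite subr_eq0 => /eqP e.
  by rewrite (ipC hI f y) e -(ipC hI).
Qed.

End Rel.

Unset Implicit Arguments.

Lemma eaddC (a b : enat) : eadd a b = eadd b a.
Proof. by case: a; case: b => //= m n; rewrite addnC. Qed.

Theorem theorem3p1 (R : realType) (X : lmodType R[i]) (ip : X -> X -> R[i])
  (hX : hilbert ip) (A B At : X * X -> Prop)
  (hAB : dual_pair ip A B)
  (hsA : restr (rs ip (adjoint ip A)) (dom B) = rs ip B)
  (hsB : restr (rs ip (adjoint ip B)) (dom A) = rs ip A)
  (h0B : forall x, mul0 (adjoint ip B) x -> ker (adjoint ip A) x -> x = 0)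
  (h0A : forall x, mul0 (adjoint ip A) x -> ker (adjoint ip B) x -> x = 0)
  (hExt : Ext ip A B At) :
  (ndef ip A B = eadd (qdim (dom (adjoint ip B)) (dom At))
                      (qdim (dom (adjoint ip A)) (dom (adjoint ip At)))
   /\ ndef ip A B = eadd (qdim (dom At) (dom A))
                      (qdim (dom (adjoint ip At)) (dom B)))
  /\ (quasi_selfadjoint ip A B At ->
      exists k : enat,
        [/\ ndef ip A B = eadd k k,
            qdim (dom (adjoint ip B)) (dom At) = k,
            qdim (dom (adjoint ip A)) (dom (adjoint ip At)) = k,
            qdim (dom At) (dom A) = k &
            qdim (dom (adjoint ip At)) (dom B) = k]).
Proof.
case: hAB => hA [hB AB].
case: hExt => hAt [AAt AtB].
have lA := proj1 hA; have lB := proj1 hB; have lAt := proj1 hAt.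
have BA := sym_adj hX AB.
have BAt := sym_adj hX AtB.
have s1 := mul0_eq hX hA AB hsB h0B.
have s2 := mul0_eq hX hB BA hsA h0A.
have AtsAs := adj_anti (ip:=ip) AAt.
have I1 : qdim (dom At) (dom A) = qdim (dom (adjoint ip A)) (dom (adjoint ip At)).
  apply: (pair_dim hX lA lAt (adj_lin hX At) (adj_lin hX A)) => //.
  - by move=> y hy; apply: s1; apply: AtB hy.
  - by move=> g hg; apply: BAt; apply: s2 hg.
  - by move=> f g hS hQ; exists g.
  - by move=> x y hQ hS; exists y; apply: (adj2_closed hX hA).
have I2 : qdim (dom (adjoint ip B)) (dom At) = qdim (dom (adjoint ip At)) (dom B).
  apply: (pair_dim hX lAt (adj_lin hX B) lB (adj_lin hX At)) => //.
  - exact: adj2.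
  - by move=> y hy; apply: AAt; apply: s1.
  - by move=> g hg; apply: s2; apply: AtsAs.
  - by move=> f g hS hQ; exists g; apply: (adj2_closed hX hB).
  - by move=> x y hQ hS; exists y; apply: (adj2_closed hX hAt).
have Add : qdim (dom (adjoint ip A)) (dom B) =
    eadd (qdim (dom (adjoint ip A)) (dom (adjoint ip At)))
         (qdim (dom (adjoint ip At)) (dom B)).
  apply: qdim_add.
  - exact: dom_sub (adj_lin hX A).
  - exact: dom_sub (adj_lin hX At).
  - exact: dom_sub lB.
  - by move=> x [y h]; exists y; apply: BAt.
  - by move=> x [y h]; exists y; apply: AtsAs.
rewrite /ndef Add; split; first split.
- by rewrite -I2 eaddC.
- by rewrite I1.
move=> [_ hq]; exists (qdim (dom At) (dom A)); split.
- by rewrite -I1 -hq.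
- by rewrite I2 -hq.
- by rewrite I1.
- by [].
- by rewrite hq.
Qed.
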